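(* Let $(\Gamma,M)$ be an E-GCM graph which is unital OA-cyclic, with Coxeter group $W$. Then for all $w\in W$, \[ f_1\,\ell(w)\le |N_M(w)|\le f_2\,\ell(w),\] where $f_1$ and $f_2$ are respectively the minimum and the maximum of the integers $f_{\Gamma',M'}$ as $(\Gamma',M')$ ranges over the OA-connected components of $(\Gamma,M)$.
   Context: E-GCM $M=(M_{ij})_{i,j\in I_n}$: real, $M_{ii}=2$, $M_{ij}\le0$ ($i\ne j$), $M_{ij}\ne0\iff M_{ji}\ne0$, nonzero $M_{ij}M_{ji}$ either $\ge4$ or $=4\cos^2(\pi/m)$ with $m\ge3$ integer; nodes $\gamma_i$, adjacent iff $M_{ij}\ne 0$. Coxeter group $W$: generators $s_i$, $s_i^2=e$, $(s_is_j)^{m_{ij}}=e$, with $m_{ij}=k$ if $M_{ij}M_{ji}=4\cos^2(\pi/k)$ ($k\ge2$), $m_{ij}=\infty$ if $M_{ij}M_{ji}\ge4$; $\ell$ = length. $W$ acts on real $V$ with basis $(\alpha_i)$ via $s_i.\alpha_j=\alpha_j-M_{ij}\alpha_i$; $\Phi_M=\{w.\alpha_i\}$; $\Phi_M^+$ ($\Phi_M^-$) = roots with all coefficients $\ge 0$ ($\le0$). $N_M(w):=\{\alpha\in\Phi_M^+: w.\alpha\in\Phi_M^-\}$. Odd-adjacent: $m_{ij}$ odd; then $K_{ji}:=-M_{ji}/(2\cos(\pi/m_{ij}))$. OA-path: sequence of nodes $[\gamma_{i_0},\dots,\gamma_{i_p}]$ with consecutive ones odd-adjacent, $\Pi_{\mathcal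 P}=K_{i_pi_{p-1}}\cdots K_{i_1i_0}$; OA-cycle: $\gamma_{i_p}=\gamma_{i_0}$. $(\Gamma,M)$ is unital OA-cyclic if $\Pi_{\mathcal C}=1$ for every OA-cycle. OA-connected component: induced E-GCM subgraph on a maximal set of nodes pairwise joinable by OA-paths. For an OA-connected component $(\Gamma',M')$ (unital OA-cyclic here), $f_{\Gamma',M'}:=|\{K\alpha_x:K\in\mathbb{R}\}\cap\Phi_M^+|$ for any node $\gamma_x$ of $(\Gamma',M')$; this number is finite and independent of the choice of $x$. *)

(* Defs.v *)
From HB Require Import structures.
From mathcomp Require Import all_boot all_order all_algebra.
From mathcomp Require Import all_classical all_reals trigo.
Set Implicit Arguments. Unset Strict Implicit. Unset Printing Implicit Defensive.
Import Order.TTheory GRing.Theory Num.Theory.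
Local Open Scope ring_scope.

Section EGCM.
Variables (R : realType) (n : nat).
Implicit Types (M : 'M[R]_n) (i j x y z : 'I_n).

Definition fourcos2 (k : nat) : R := 4 * (cos (pi / k%:R)) ^+ 2.

Definition is_EGCM M : Prop :=
  (forall i, M i i = 2) /\
  (forall i j, i != j -> M i j <= 0) /\
  (forall i j, M i j != 0 <-> M j i != 0) /\
  (forall i j, i != j -> M i j * M j i != 0 ->
      4 <= M i j * M j i \/ exists m : nat, (3 <= m)%N /\ M i j * M j i = fourcos2 m).

(* m_ij = k (k >= 2) iff i != j and M_ij M_ji = 4 cos^2(pi/k); m_ii = 1;
   m_ij = infinity otherwise (i.e. when M_ij M_ji >= 4). *)
Definition mcox M i j (k : nat) : Prop :=
  (i = j /\ k = 1%N) \/ (i != j /\ (2 <= k)%N /\ M i j * M j i = fourcos2 k).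

(* Coxeter group W given by its presentation: words in the generators
   (a word [:: i1; ...; ik] stands for s_i1 ... s_ik), modulo the
   congruence generated by the relators (s_i s_j)^{m_ij} for finite m_ij. *)
Definition relator M (r : seq 'I_n) : Prop :=
  exists i j k, mcox M i j k /\ r = flatten (nseq k [:: i; j]).

Inductive weq M : seq 'I_n -> seq 'I_n -> Prop :=
| weq_refl u : weq M u u
| weq_sym u v : weq M u v -> weq M v u
| weq_trans u v t : weq M u v -> weq M v t -> weq M u t
| weq_rel u r v : relator M r -> weq M (u ++ r ++ v) (u ++ v).

Lemma wlen_ex M (w : seq 'I_n) :
  exists k, `[< exists u, weq M u w /\ size u = k >].
Proof. by exists (size w); apply/asboolP; exists w; split=> //; apply: weq_refl. Qed.

Definition wlen M (w : seq 'I_n) : nat := ex_minn (wlen_ex M w).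

(* The space V with basis (alpha_i), as row vectors of coefficients. *)
Definition alpha i : 'rV[R]_n := \row_j (if j == i then 1 else 0).

(* s_i . v = v - (sum_j M_ij v_j) alpha_i, so that s_i.alpha_j = alpha_j - M_ij alpha_i *)
Definition sact M i (v : 'rV[R]_n) : 'rV[R]_n :=
  v - (\sum_j M i j * v 0 j) *: alpha i.

Definition wact M (w : seq 'I_n) (v : 'rV[R]_n) : 'rV[R]_n := foldr (sact M) v w.

Definition is_root M (a : 'rV[R]_n) : Prop := exists w i, a = wact M w (alpha i).
Definition is_pos_root M a : Prop := is_root M a /\ forall j, 0 <= a 0 j.
Definition is_neg_root M a : Prop := is_root M a /\ forall j, a 0 j <= 0.

Definition NM M (w : seq 'I_n) (a : 'rV[R]_n) : Prop :=
  is_pos_root M a /\ is_neg_root M (wact M w a).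

Definition oddadj M i j (k : nat) : Prop := mcox M i j k /\ i != j /\ odd k.

Definition Kc M j i (k : nat) : R := - M j i / (2 * cos (pi / k%:R)).

(* oa_walk M x y c : there is an OA-path [x = gamma_i0, ..., gamma_ip = y]
   with Pi_P = c = K_{ip i(p-1)} ... K_{i1 i0} *)
Inductive oa_walk M : 'I_n -> 'I_n -> R -> Prop :=
| oa_nil x : oa_walk M x x 1
| oa_cons x y z c k : oa_walk M x y c -> oddadj M y z k ->
    oa_walk M x z (Kc M z y k * c).

Definition unital_OA_cyclic M : Prop := forall x c, oa_walk M x x c -> c = 1.

Definition fcount M x (f : nat) : Prop :=
  exists s : seq 'rV[R]_n, uniq s /\ size s = f /\
    forall a, a \in s <-> ((exists K : R, a = K *: alpha x) /\ is_pos_root M a).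

End EGCM.

(* Main.v *)
Require Import Defs.
From HB Require Import structures.
From mathcomp Require Import all_boot all_order all_algebra.
From mathcomp Require Import all_classical all_reals trigo.
From mathcomp Require Import ring lra zify.
Import Order.TTheory GRing.Theory Num.Theory.
Local Open Scope ring_scope.
Set Implicit Arguments. Unset Strict Implicit. Unset Printing Implicit Defensive.
Section Words.
Variables (R : realType) (n : nat) (M : 'M[R]_n).

Lemma weq_catl p u v : weq M u v -> weq M (p ++ u) (p ++ v).
Proof.
elim=> [u0|u0 v0 _ IH|u0 v0 t0 _ IH1 _ IH2|u0 r v0 Hr].
- exact: weq_refl.
- exact: weq_sym.
- exact: weq_trans IH1 IH2.
- have := @weq_rel _ _ M (p ++ u0) r v0 Hr; by rewrite -!catA.
Qed.

Lemma weq_catr q u v : weq M u v -> weq M (u ++ q) (v ++ q).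
Proof.
elim=> [u0|u0 v0 _ IH|u0 v0 t0 _ IH1 _ IH2|u0 r v0 Hr].
- exact: weq_refl.
- exact: weq_sym.
- exact: weq_trans IH1 IH2.
- have := @weq_rel _ _ M u0 r (v0 ++ q) Hr; by rewrite -!catA.
Qed.

Lemma weq_cat u u' v v' : weq M u u' -> weq M v v' -> weq M (u ++ v) (u' ++ v').
Proof.
move=> H1 H2; apply: weq_trans (weq_catr _ H1) _; exact: weq_catl.
Qed.

Lemma relator_ii i : relator M [:: i; i].
Proof. by exists i, i, 1%N; split=> //; left. Qed.

Lemma weq_ii p i q : weq M (p ++ [:: i; i] ++ q) (p ++ q).
Proof. exact: weq_rel (relator_ii i). Qed.

Lemma wlen_le u w : weq M u w -> (wlen M w <= size u)%N.
Proof.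
move=> H; rewrite /wlen; case: ex_minnP => k _ Hmin; apply: Hmin.
by apply/asboolP; exists u.
Qed.

Lemma wlen_rep w : exists u, weq M u w /\ size u = wlen M w.
Proof.
rewrite /wlen; case: ex_minnP => k /asboolP [u [Hu Hs]] _; by exists u.
Qed.

Lemma wlen_size w : (wlen M w <= size w)%N.
Proof. apply: wlen_le; exact: weq_refl. Qed.

Lemma wlen_weq u w : weq M u w -> wlen M u = wlen M w.
Proof.
move=> H; apply/eqP; rewrite eqn_leq; apply/andP; split.
- have [v [Hv <-]] := wlen_rep w; apply: wlen_le; apply: weq_trans Hv (weq_sym H).
- have [v [Hv <-]] := wlen_rep u; apply: wlen_le; apply: weq_trans Hv H.
Qed.

Lemma size_flatten_nseq (k : nat) (s : seq 'I_n) :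
  size (flatten (nseq k s)) = (k * size s)%N.
Proof. by elim: k => //= k IH; rewrite size_cat IH mulSn. Qed.

Lemma relator_even r : relator M r -> ~~ odd (size r).
Proof.
case=> [i [j [k [_ ->]]]]; rewrite size_flatten_nseq /= muln2 odd_double //.
Qed.

Lemma weq_odd u v : weq M u v -> odd (size u) = odd (size v).
Proof.
elim=> [u0|u0 v0 _ ->|u0 v0 t0 _ -> _ ->|u0 r v0 Hr] //.
rewrite !size_cat !oddD; move/negbTE: (relator_even Hr) => ->.
by case: (odd (size u0)); case: (odd (size v0)).
Qed.

Lemma wlen_odd w : odd (wlen M w) = odd (size w).
Proof. have [u [Hu <-]] := wlen_rep w; exact: weq_odd. Qed.

Lemma wlen_cat x y : (wlen M (x ++ y) <= wlen M x + wlen M y)%N.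
Proof.
have [u [Hu <-]] := wlen_rep x; have [v [Hv <-]] := wlen_rep y.
rewrite -size_cat; apply: wlen_le; exact: weq_cat.
Qed.

Lemma wlen_cat_size x y : (wlen M (x ++ y) <= wlen M x + size y)%N.
Proof. apply: leq_trans (wlen_cat x y) _; by rewrite leq_add2l wlen_size. Qed.

Lemma wlen_cat_size2 x y : (wlen M (x ++ y) <= size x + wlen M y)%N.
Proof. apply: leq_trans (wlen_cat x y) _; by rewrite leq_add2r wlen_size. Qed.

Lemma wlen_rconsP w i :
  wlen M (rcons w i) = (wlen M w).+1 \/ wlen M w = (wlen M (rcons w i)).+1.
Proof.
have H1 : (wlen M (rcons w i) <= wlen M w + 1)%N.
  by rewrite -cats1; apply: leq_trans (wlen_cat_size _ _) _.
have H2 : (wlen M w <= wlen M (rcons w i) + 1)%N.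
  have -> : wlen M w = wlen M (rcons w i ++ [:: i]).
    apply: wlen_weq; apply: weq_sym.
    rewrite -cats1 -catA /=; have := weq_ii w i [::]; by rewrite !cats0.
  apply: leq_trans (wlen_cat_size _ _) _; done.
have H3 : wlen M (rcons w i) != wlen M w.
  apply/eqP => E; have := wlen_odd (rcons w i); rewrite E wlen_odd size_rcons /=.
  by case: (odd (size w)).
lia.
Qed.

Lemma wlen_consP w i :
  wlen M (i :: w) = (wlen M w).+1 \/ wlen M w = (wlen M (i :: w)).+1.
Proof.
have H1 : (wlen M (i :: w) <= wlen M w + 1)%N.
  by rewrite -cat1s; apply: leq_trans (wlen_cat_size2 _ _) _; rewrite addnC.
have H2 : (wlen M w <= wlen M (i :: w) + 1)%N.
  have -> : wlen M w = wlen M ([:: i] ++ i :: w).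
    apply: wlen_weq; apply: weq_sym.
    have := weq_ii [::] i w; by [].
  apply: leq_trans (wlen_cat_size2 _ _) _; by rewrite addnC.
have H3 : wlen M (i :: w) != wlen M w.
  apply/eqP => E; have := wlen_odd (i :: w); rewrite E wlen_odd /=.
  by case: (odd (size w)).
lia.
Qed.

Definition reduced w := wlen M w = size w.

Lemma reduced_rcons w i : reduced (rcons w i) -> reduced w.
Proof.
rewrite /reduced size_rcons => H; have := wlen_size w.
case: (wlen_rconsP w i); lia.
Qed.

Lemma reduced_cons w i : reduced (i :: w) -> reduced w.
Proof.
rewrite /reduced /= => H; have := wlen_size w.
case: (wlen_consP w i); lia.
Qed.

Lemma reduced_sorted u : reduced u -> sorted (fun x y => x != y) u.
Proof.
elim: u => // x u IH Hr.
have Hu := reduced_cons Hr; have {}IH := IH Hu.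
case: u IH Hu Hr => // y u IH Hu Hr /=; apply/andP; split => //.
apply/eqP => Exy; subst y.
have := wlen_le (weq_sym (weq_ii [::] x u)).
by move: Hr; rewrite /reduced /= => ->; lia.
Qed.

End Words.
Section Action.
Variables (R : realType) (n : nat) (M : 'M[R]_n).
Hypothesis HMii : forall i, M i i = 2.

Definition phi k (v : 'rV[R]_n) : R := \sum_l M k l * v 0 l.

Lemma alphaE (i l : 'I_n) : alpha R i 0 l = if l == i then 1 else 0.
Proof. by rewrite mxE. Qed.

Lemma phi_alpha k i : phi k (alpha R i) = M k i.
Proof.
rewrite /phi (bigD1 i) //= big1 => [|l /negbTE Hl]; first by rewrite alphaE eqxx mulr1 addr0.
by rewrite alphaE Hl mulr0.
Qed.

Lemma phiD k v w : phi k (v + w) = phi k v + phi k w.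
Proof. rewrite /phi -big_split /=; apply: eq_bigr => l _; by rewrite mxE mulrDr. Qed.

Lemma phiZ k c v : phi k (c *: v) = c * phi k v.
Proof. rewrite /phi mulr_sumr; apply: eq_bigr => l _; rewrite mxE; ring. Qed.

Lemma sactE i v : sact M i v = v - phi i v *: alpha R i.
Proof. by []. Qed.

Lemma sactD i v w : sact M i (v + w) = sact M i v + sact M i w.
Proof. rewrite !sactE phiD scalerDl; apply/rowP => l; rewrite !mxE; ring. Qed.

Lemma sactZ i c v : sact M i (c *: v) = c *: sact M i v.
Proof. rewrite !sactE phiZ -scalerA; apply/rowP => l; rewrite !mxE; ring. Qed.

Lemma sactK i v : sact M i (sact M i v) = v.
Proof.
rewrite !sactE phiD.
have -> : phi i (- (phi i v *: alpha R i)) = - (phi i v * M i i).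
  by rewrite -scaleNr phiZ phi_alpha mulNr.
rewrite HMii; apply/rowP => l; rewrite !mxE; ring.
Qed.

Lemma sact_alpha i : sact M i (alpha R i) = - alpha R i.
Proof. rewrite sactE phi_alpha HMii; apply/rowP => l; rewrite !mxE; ring. Qed.

Lemma sact_coord i v l : l != i -> sact M i v 0 l = v 0 l.
Proof. move/negbTE=> H; by rewrite sactE !mxE H mulr0 subr0. Qed.

Lemma wactD w v u : wact M w (v + u) = wact M w v + wact M w u.
Proof. elim: w => //= x w IH; by rewrite IH sactD. Qed.

Lemma wactZ w c v : wact M w (c *: v) = c *: wact M w v.
Proof. elim: w => //= x w IH; by rewrite IH sactZ. Qed.

Lemma wactN w v : wact M w (- v) = - wact M w v.
Proof. by rewrite -scaleN1r wactZ scaleN1r. Qed.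

Lemma wactB w v u : wact M w (v - u) = wact M w v - wact M w u.
Proof. by rewrite wactD wactN. Qed.

Lemma wact0 w : wact M w 0 = 0.
Proof. have := wactZ w 0 0; by rewrite !scale0r. Qed.

Lemma wact_cat u w v : wact M (u ++ w) v = wact M u (wact M w v).
Proof. by rewrite /wact foldr_cat. Qed.

Lemma wact_rcons w i v : wact M (rcons w i) v = wact M w (sact M i v).
Proof. by rewrite -cats1 wact_cat. Qed.

Lemma wact_revK w v : wact M (rev w) (wact M w v) = v.
Proof.
elim: w v => //= x w IH v; by rewrite rev_cons wact_rcons sactK IH.
Qed.

Lemma wact_revK' w v : wact M w (wact M (rev w) v) = v.
Proof. by have := wact_revK (rev w) v; rewrite revK. Qed.

Lemma alpha_neq0 (i : 'I_n) : alpha R i != 0.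
Proof. apply/eqP => /rowP /(_ i); rewrite !mxE eqxx => /eqP; by rewrite oner_eq0. Qed.

Lemma root_neq0 a : is_root M a -> a != 0.
Proof.
case=> w [i ->]; apply/eqP => H.
have := wact_revK w (alpha R i); rewrite H wact0 => /esym/eqP; by rewrite (negbTE (alpha_neq0 i)).
Qed.

Lemma root_sact i a : is_root M a -> is_root M (sact M i a).
Proof. case=> w [k ->]; by exists (i :: w), k. Qed.

Lemma root_wact u a : is_root M a -> is_root M (wact M u a).
Proof. case=> w [k ->]; exists (u ++ w), k; by rewrite wact_cat. Qed.

End Action.
Section Dihedral.
Variables (R : realType) (n : nat) (M : 'M[R]_n).

Fixpoint wd (x y : 'I_n) (t : nat) : seq 'I_n :=
  if t is t'.+1 then (if odd t' then x else y) :: wd x y t' else [::].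

Lemma size_wd x y t : size (wd x y t) = t.
Proof. by elim: t => //= t ->. Qed.

Lemma flatten_wd x y k : flatten (nseq k [:: x; y]) = wd x y k.*2.
Proof. elim: k => //= k ->; by rewrite odd_double /=. Qed.

Lemma wd_rcons x y m : wd x y m.+1 = rcons (wd y x m) y.
Proof.
elim: m x y => // m IH x y.
change (wd x y m.+2) with ((if odd m.+1 then x else y) :: wd x y m.+1).
rewrite IH /=; by case: (odd m).
Qed.

Lemma rev_wd x y m : rev (wd x y m) = if odd m then wd x y m else wd y x m.
Proof.
elim: m x y => // m IH x y.
rewrite {1}wd_rcons rev_rcons IH /=; by case: (odd m).
Qed.

Lemma wd_add x y p q :
  wd x y (p + q) = (if odd q then wd y x p else wd x y p) ++ wd x y q.
Proof.
elim: p => [|p IH]; first by case: (odd q).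
rewrite addSn /= IH oddD; by case: (odd q); case: (odd p).
Qed.

Lemma weq_rev u : weq M (u ++ rev u) [::].
Proof.
elim: u => [|x u IH]; first exact: weq_refl.
have -> : (x :: u) ++ rev (x :: u) = [:: x] ++ (u ++ rev u) ++ [:: x].
  by rewrite rev_cons -cats1 /= -catA.
apply: weq_trans (weq_catl _ (weq_catr _ IH)) _.
have := weq_ii M [::] x [::]; by rewrite !cats0.
Qed.

Lemma mcox_sym x y k : mcox M x y k -> mcox M y x k.
Proof.
case=> [[-> ->]|[Hxy [Hk E]]]; first by left.
right; split; first by rewrite eq_sym.
by split=> //; rewrite mulrC.
Qed.

Lemma mcox_relator x y k : mcox M x y k -> relator M (wd x y k.*2).
Proof. move=> H; exists x, y, k; by rewrite flatten_wd. Qed.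

Lemma braid x y m : relator M (wd x y m.*2) -> weq M (wd x y m) (wd y x m).
Proof.
move=> Hr.
have HQ : weq M (wd x y (m + m)) [::].
  have := @weq_rel _ _ M [::] _ [::] Hr; by rewrite cats0 /= addnn.
set A := (if odd m then wd y x m else wd x y m).
have E : wd x y (m + m) = A ++ wd x y m by rewrite wd_add.
have H1a : weq M (A ++ (wd x y m ++ rev (wd x y m))) A.
  by have := weq_catl A (weq_rev (wd x y m)); rewrite cats0.
have H1b : weq M (A ++ (wd x y m ++ rev (wd x y m))) (rev (wd x y m)).
  by rewrite catA -E; exact: (weq_catr (rev (wd x y m)) HQ).
have H1 := weq_trans (weq_sym H1a) H1b.
move: H1; rewrite rev_wd /A; case: (odd m) => // H; exact: weq_sym.
Qed.

Lemma wd_long i j m t : mcox M i j m -> (1 <= m)%N -> (m <= t)%N ->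
  ~ reduced M (rcons (wd i j t) i).
Proof.
case: m => // m Hm _ Hmt Hred.
have Hb : weq M (wd j i m.+1) (wd i j m.+1).
  by apply: braid; apply: mcox_relator; apply: mcox_sym.
set c := if odd m.+1 then j else i.
set A := (if odd m.+2 then wd i j (t - m.+1) else wd j i (t - m.+1)).
have E1 : rcons (wd i j t) i = A ++ [:: c] ++ wd j i m.+1.
  rewrite -wd_rcons (_ : t.+1 = (t - m.+1) + m.+2)%N; last by lia.
  by rewrite wd_add.
have E2 : wd i j m.+1 = [:: c] ++ wd i j m by rewrite /c /=; case: (odd m).
have H : weq M (A ++ [:: c] ++ wd j i m.+1) (A ++ wd i j m).
  apply: weq_catl; apply: weq_trans (weq_catl [:: c] Hb) _.
  rewrite E2 catA; have := weq_ii M [::] c (wd i j m); by [].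
move: Hred; rewrite /reduced E1 => Hred.
have := wlen_le (weq_sym H); rewrite Hred !size_cat /= !size_wd /A; case: (odd m.+2); rewrite size_wd; lia.
Qed.

End Dihedral.
Section Seqs.
Variable R : realType.

Fixpoint eo (c : R) (k : nat) : R * R :=
  if k is k'.+1 then let: (e, o) := eo c k' in (c * (e - o) - e, e - o) else (1, 0).
Definition ee c k := (eo c k).1.
Definition oo c k := (eo c k).2.

Lemma ee0 c : ee c 0 = 1. Proof. by []. Qed.
Lemma oo0 c : oo c 0 = 0. Proof. by []. Qed.
Lemma ooS c k : oo c k.+1 = ee c k - oo c k.
Proof. rewrite /ee /oo /=; by case: (eo c k). Qed.
Lemma eeS c k : ee c k.+1 = c * oo c k.+1 - ee c k.
Proof. rewrite ooS /ee /oo /=; by case: (eo c k). Qed.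

Fixpoint Sp (r : R) (q : nat) : R * R :=
  if q is q'.+1 then let: (s0, s1) := Sp r q' in (s1, r * s1 - s0) else (0, 1).
Definition S r q := (Sp r q).1.

Lemma S0 r : S r 0 = 0. Proof. by []. Qed.
Lemma S1 r : S r 1 = 1. Proof. by []. Qed.
Lemma SS r q : S r q.+2 = r * S r q.+1 - S r q.
Proof. rewrite /S /=; by case: (Sp r q). Qed.

Lemma eo_S c r h : r ^+ 2 = c -> ee c h = S r h.*2.+1 /\ r * oo c h = S r h.*2.
Proof.
move=> Hr; elim: h => [|h [IH1 IH2]]; first by rewrite ee0 oo0 mulr0 S1 S0.
have Ho : r * oo c h.+1 = S r h.*2.+2 by rewrite ooS SS -IH1 -IH2; ring.
split=> //.
rewrite eeS doubleS SS -Ho -IH1 -Hr; ring.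
Qed.

Lemma S_trig th : sin th != 0 -> forall q, S (2 * cos th) q = sin (q%:R * th) / sin th.
Proof.
move=> Hs.
suff H : forall q, S (2 * cos th) q = sin (q%:R * th) / sin th /\
                   S (2 * cos th) q.+1 = sin (q.+1%:R * th) / sin th by move=> q; case: (H q).
elim=> [|q [IH1 IH2]].
  by rewrite S0 S1 mul0r sin0 mul0r mul1r divff.
split=> //; rewrite SS IH1 IH2.
have E1 : q.+2%:R * th = q.+1%:R * th + th by rewrite -addn1 natrD mulrDl mul1r.
have E2 : q%:R * th = q.+1%:R * th - th by rewrite -addn1 natrD mulrDl mul1r addrK.
rewrite E1 E2 !sinD sinN cosN; field; exact: Hs.
Qed.

Lemma S_ge0_big r : 2 <= r -> forall q, 0 <= S r q /\ S r q <= S r q.+1.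
Proof.
move=> Hr; elim=> [|q [IH1 IH2]]; first by rewrite S0 S1; lra.
split; first lra.
rewrite SS; nra.
Qed.

End Seqs.
Section Trig.
Variable R : realType.
Variable m : nat.
Hypothesis Hm : (2 <= m)%N.
Let th : R := pi / m%:R.

Lemma m_gt0 : (0 : R) < m%:R.
Proof. rewrite ltr0n; lia. Qed.

Lemma th_gt0 : 0 < th.
Proof. by rewrite /th divr_gt0 // ?pi_gt0 // m_gt0. Qed.

Lemma qth_le_pi q : (q <= m)%N -> q%:R * th <= pi.
Proof.
move=> Hq; rewrite /th mulrA ler_pdivrMr ?m_gt0 //.
rewrite mulrC ler_wpM2l ?ler_nat //; exact: ltW (pi_gt0 R).
Qed.

Lemma mth : m%:R * th = pi.
Proof. rewrite /th mulrC -mulrA mulVf ?mulr1 //; by rewrite gt_eqF ?m_gt0. Qed.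

Lemma sin_th_gt0 : 0 < sin th.
Proof.
apply: sin_gt0_pi; rewrite th_gt0 /=.
rewrite /th ltr_pdivrMr ?m_gt0 // ltr_pMr ?pi_gt0 // ltr1n; lia.
Qed.

Lemma sin_qth_ge0 q : (q <= m)%N -> 0 <= sin (q%:R * th).
Proof.
move=> Hq; apply: sin_ge0_pi; rewrite qth_le_pi // andbT.
by rewrite mulr_ge0 // ltW // th_gt0.
Qed.

Lemma cos_th_lt1 : cos th ^+ 2 < 1.
Proof. rewrite cos2sin2; have := sin_th_gt0; nra. Qed.

Lemma sin_2m1 : sin (m.*2.+1%:R * th) = sin th.
Proof.
have -> : m.*2.+1%:R * th = th + pi *+ 2.
  by rewrite -addn1 -muln2 natrD natrM mulrDl mulrAC mth mul1r addrC mulr_natr.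
by rewrite sinD2pi.
Qed.

Lemma sin_2m : sin (m.*2%:R * th) = 0.
Proof.
have -> : m.*2%:R * th = pi *+ 2 by rewrite -muln2 natrM mulrAC mth mulr_natr.
by rewrite sin2pi.
Qed.

Lemma cos_th_gt0 : (3 <= m)%N -> 0 < cos th.
Proof.
move=> H3; apply: cos_gt0_pihalf.
have Hth := th_gt0; apply/andP; split.
  have := pi_gt0 R; lra.
rewrite /th ltr_pM2l ?pi_gt0 // ltf_pV2.
all: by rewrite ?posrE ?m_gt0 ?ltr_nat.
Qed.

End Trig.
Section Rank2.
Variables (R : realType) (n : nat) (M : 'M[R]_n).
Hypothesis HMii : forall i, M i i = 2.
Hypothesis Hnz : forall x y, M x y != 0 <-> M y x != 0.
Variables (i j : 'I_n).
Hypothesis Hij : i != j.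

Lemma wact_cons x w v : wact M (x :: w) v = sact M x (wact M w v).
Proof. by []. Qed.

Definition P (p q : R) : 'rV[R]_n := p *: alpha R i + q *: alpha R j.
Local Notation a := (- M i j).
Local Notation b := (- M j i).
Local Notation c := (M i j * M j i).

Lemma P_i p q : P p q 0 i = p.
Proof. rewrite !mxE eqxx (negbTE Hij); ring. Qed.
Lemma P_j p q : P p q 0 j = q.
Proof. rewrite !mxE eqxx eq_sym (negbTE Hij); ring. Qed.

Lemma P_inj p q p' q' : P p q = P p' q' -> p = p' /\ q = q'.
Proof. move=> E; split; [by rewrite -(P_i p q) E P_i | by rewrite -(P_j p q) E P_j]. Qed.

Lemma alphaiP : alpha R i = P 1 0.
Proof. apply/rowP => l; rewrite !mxE; case: (l == i); case: (l == j); rewrite /=; ring. Qed.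
Lemma alphajP : alpha R j = P 0 1.
Proof. apply/rowP => l; rewrite !mxE; case: (l == i); case: (l == j); rewrite /=; ring. Qed.

Lemma PD p q p' q' : P p q + P p' q' = P (p + p') (q + q').
Proof. apply/rowP => l; rewrite !mxE; ring. Qed.

Lemma PZ k p q : k *: P p q = P (k * p) (k * q).
Proof. apply/rowP => l; rewrite !mxE; ring. Qed.

Lemma sact_iP p q : sact M i (P p q) = P (a * q - p) q.
Proof.
apply/rowP => l; rewrite sactE phiD !phiZ !phi_alpha HMii !mxE.
case: (l == i); case: (l == j); rewrite /=; ring.
Qed.

Lemma sact_jP p q : sact M j (P p q) = P p (b * p - q).
Proof.
apply/rowP => l; rewrite sactE phiD !phiZ !phi_alpha HMii !mxE.
case: (l == i); case: (l == j); rewrite /=; ring.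
Qed.

Lemma wd_act h :
  wact M (wd i j h.*2) (alpha R i) = P (ee c h) (b * oo c h) /\
  wact M (wd i j h.*2.+1) (alpha R i) = P (ee c h) (b * oo c h.+1).
Proof.
elim: h => [|h [IH1 IH2]].
  split; first by rewrite /= alphaiP ee0 oo0 mulr0.
  by rewrite /= alphaiP sact_jP ooS ee0 oo0; congr P; ring.
have E1 : wd i j h.+1.*2 = i :: wd i j h.*2.+1.
  by rewrite doubleS; change (wd i j h.*2.+2) with ((if odd h.*2.+1 then i else j) :: wd i j h.*2.+1); rewrite /= odd_double.
have E2 : wd i j h.+1.*2.+1 = j :: wd i j h.+1.*2.
  by change (wd i j h.+1.*2.+1) with ((if odd h.+1.*2 then i else j) :: wd i j h.+1.*2); rewrite odd_double.
have H1 : wact M (wd i j h.+1.*2) (alpha R i) = P (ee c h.+1) (b * oo c h.+1).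
  rewrite E1 wact_cons IH2 sact_iP eeS; congr P; ring.
split=> //.
rewrite E2 wact_cons H1 sact_jP (ooS c h.+1); congr P; ring.
Qed.

End Rank2.
Section Rank2b.
Variables (R : realType) (n : nat) (M : 'M[R]_n).
Hypothesis HMii : forall i, M i i = 2.
Hypothesis Hnz : forall x y, M x y != 0 <-> M y x != 0.
Variables (i j : 'I_n).
Hypothesis Hij : i != j.
Local Notation a := (- M i j).
Local Notation b := (- M j i).
Local Notation c := (M i j * M j i).
Local Notation P := (P i j).

Lemma fourcos2_2 : fourcos2 R 2 = 0.
Proof. by rewrite /fourcos2 cos_pihalf expr0n mulr0. Qed.

Lemma c0_zero : c = 0 -> M j i = 0.
Proof.
move=> H; apply/eqP; apply/negPn/negP => Hji.
have Hij' : M i j != 0 by apply/Hnz.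
by move: H => /eqP; rewrite mulf_eq0 (negbTE Hij') (negbTE Hji).
Qed.

Lemma fourcos2_sq m : fourcos2 R m = (2 * cos (pi / m%:R)) ^+ 2.
Proof. by rewrite /fourcos2 exprMn -natrX. Qed.

Lemma rel_alpha k : (2 <= k)%N -> c = fourcos2 R k ->
  wact M (wd i j k.*2) (alpha R i) = alpha R i.
Proof.
move=> Hk Hc; have [H1 _] := wd_act HMii i j k; rewrite H1 (alphaiP R i j).
case: (ltngtP k 2) => Hk2; first by lia.
- have Hth := cos_th_gt0 R (ltnW Hk2) Hk2.
  have Hs := sin_th_gt0 R (ltnW Hk2).
  set th := pi / k%:R in Hth Hs.
  have Hr : (2 * cos th) ^+ 2 = c by rewrite Hc fourcos2_sq.
  have [E1 E2] := eo_S k Hr.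
  have Hs0 : sin th != 0 by rewrite gt_eqF.
  rewrite !S_trig // in E1 E2.
  rewrite sin_2m // in E2; rewrite sin_2m1 // divff // in E1.
  have Ho : oo c k = 0.
    move: E2; rewrite mul0r => /eqP; rewrite mulf_eq0 => /orP [|/eqP //].
    by rewrite mulf_eq0 pnatr_eq0 /= (gt_eqF Hth).
  by rewrite E1 Ho mulr0.
- subst k; rewrite fourcos2_2 in Hc.
  have Hb := c0_zero Hc.
  rewrite Hc !eeS !ooS ee0 oo0 Hb; congr P; ring.
Qed.

Lemma rank2_pos_gen t r : 0 < r -> r ^+ 2 = c -> 0 <= b ->
  (forall q, (q <= t.+1)%N -> 0 <= S r q) ->
  exists p q, 0 <= p /\ 0 <= q /\ wact M (wd i j t) (alpha R i) = P p q.
Proof.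
move=> Hr0 Hr Hb HS.
have [E1 E2] := wd_act HMii i j t./2.
have Hoo h : r * oo c h = S r h.*2 -> (h.*2 <= t.+1)%N -> 0 <= oo c h.
  move=> E Hh; have := HS _ Hh; rewrite -E; by rewrite pmulr_rge0.
have [F1 F2] := eo_S t./2 Hr.
have [G1 G2] := eo_S t./2.+1 Hr.
have Ht := odd_double_half t.
case Hodd: (odd t) Ht => /= Ht.
- exists (ee c t./2), (b * oo c t./2.+1); split; [|split].
  + rewrite F1; apply: HS; lia.
  + apply: mulr_ge0 => //; apply: Hoo => //; lia.
  + by rewrite -{1}Ht add1n E2.
- exists (ee c t./2), (b * oo c t./2); split; [|split].
  + rewrite F1; apply: HS; lia.
  + apply: mulr_ge0 => //; apply: Hoo => //; lia.
  + by rewrite -{1}Ht add0n E1.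
Qed.

Lemma rank2_pos t : M i j <= 0 -> M j i <= 0 ->
  (c != 0 -> 4 <= c \/ exists m, (3 <= m)%N /\ c = fourcos2 R m) ->
  (forall k, mcox M i j k -> (t < k)%N) ->
  exists p q, 0 <= p /\ 0 <= q /\ wact M (wd i j t) (alpha R i) = P p q.
Proof.
move=> Hij0 Hji0 Hcase Hmc.
have Hb : 0 <= b by rewrite oppr_ge0.
case: (eqVneq c 0) => Hc0.
- have Ht : (t < 2)%N.
    apply: Hmc; right; split=> //; split=> //; by rewrite Hc0 fourcos2_2.
  case: t Ht Hmc => [|[|//]] _ _.
  + exists 1, 0; split; first exact: ler01. split=> //. exact: (alphaiP R i j).
  + exists 1, (b * 1 - 0); split; first exact: ler01.
    split; first by rewrite mulr1 subr0.
    by rewrite /= (alphaiP R i j) (sact_jP HMii).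
- case: (Hcase Hc0) => [H4|[m [Hm Hcm]]].
  + have Hc : 0 <= c by apply: le_trans H4; lra.
    set r := Num.sqrt c.
    have Hr : r ^+ 2 = c by rewrite sqr_sqrtr.
    have Hr0 : 0 <= r by rewrite sqrtr_ge0.
    have Hr2 : 2 <= r by nra.
    apply: (rank2_pos_gen (r := r)) => //; first lra.
    move=> q _; by case: (S_ge0_big Hr2 q).
  + have Htm : (t < m)%N.
      apply: Hmc; right; split=> //; split=> //; lia.
    have Hm2 : (2 <= m)%N by lia.
    have Hth := cos_th_gt0 R Hm2 Hm.
    have Hs := sin_th_gt0 R Hm2.
    set th := pi / m%:R in Hth Hs.
    have Hs0 : sin th != 0 by rewrite gt_eqF.
    apply: (rank2_pos_gen (r := 2 * cos th)) => //.
    * by rewrite mulr_gt0.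
    * by rewrite Hcm fourcos2_sq.
    * move=> q Hq; rewrite S_trig //; apply: divr_ge0; last exact: ltW.
      apply: sin_qth_ge0 => //; lia.
Qed.

End Rank2b.
Section Relator.
Variables (R : realType) (n : nat) (M : 'M[R]_n).
Hypothesis HMii : forall i, M i i = 2.
Hypothesis Hnz : forall x y, M x y != 0 <-> M y x != 0.

Lemma flatten_nseqS (s : seq 'I_n) k : flatten (nseq k.+1 s) = flatten (nseq k s) ++ s.
Proof.
elim: k => [|k IH]; first by rewrite /= cats0.
change (flatten (nseq k.+2 s)) with (s ++ flatten (nseq k.+1 s)).
by rewrite {1}IH catA.
Qed.

Lemma mem_flatten_ij x (i j : 'I_n) k :
  x \in flatten (nseq k [:: i; j]) -> (x == i) || (x == j).
Proof.
elim: k => //= k IH; rewrite !inE; case/orP => [->//|]; case/orP => [->|/IH //].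
by rewrite orbT.
Qed.

Definition inspan (i j : 'I_n) (v : 'rV[R]_n) := exists p q, v = P i j p q.

Lemma inspanD i j v w : inspan i j v -> inspan i j w -> inspan i j (v + w).
Proof. move=> [p [q ->]] [p' [q' ->]]; exists (p + p'), (q + q'); exact: PD. Qed.

Lemma sact_span (i j x : 'I_n) z : (x == i) || (x == j) -> inspan i j (sact M x z - z).
Proof.
have E : sact M x z - z = - phi M x z *: alpha R x.
  by rewrite sactE addrAC subrr add0r scaleNr.
rewrite E; case/orP => /eqP ->.
- exists (- phi M i z), 0; apply/rowP => l; rewrite !mxE; ring.
- exists 0, (- phi M j z); apply/rowP => l; rewrite !mxE; ring.
Qed.

Lemma wact_span (i j : 'I_n) u y : (forall x, x \in u -> (x == i) || (x == j)) ->
  inspan i j (wact M u y - y).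
Proof.
elim: u => [|x u IH] Hu.
  exists 0, 0; rewrite subrr; apply/rowP => l; rewrite !mxE; ring.
have -> : wact M (x :: u) y - y = (sact M x (wact M u y) - wact M u y) + (wact M u y - y).
  by rewrite /= addrA subrK.
apply: inspanD; first by apply: sact_span; apply: Hu; rewrite inE eqxx.
by apply: IH => z Hz; apply: Hu; rewrite inE Hz orbT.
Qed.

Lemma rel_fix (i j : 'I_n) k : i != j -> (2 <= k)%N -> M i j * M j i = fourcos2 R k ->
  forall y, wact M (wd i j k.*2) y = y.
Proof.
move=> Hij Hk Hc y.
set F := wd i j k.*2.
have HUi : wact M F (alpha R i) = alpha R i by apply: rel_alpha.
have HUj : wact M F (alpha R j) = alpha R j.
  have H' : wact M (wd j i k.*2) (alpha R j) = alpha R j.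
    apply: rel_alpha => //; [by rewrite eq_sym | by rewrite mulrC].
  have Er : rev F = wd j i k.*2 by rewrite /F rev_wd odd_double.
  by rewrite -{1}H' -Er wact_revK'.
have HUP p q : wact M F (P i j p q) = P i j p q.
  by rewrite /P wactD !wactZ HUi HUj.
have HF x : x \in F -> (x == i) || (x == j).
  by rewrite /F -flatten_wd; apply: mem_flatten_ij.
have [p [q HZ]] := wact_span y HF.
have Hcomm v : wact M [:: i; j] (wact M F v) = wact M F (wact M [:: i; j] v).
  rewrite -!wact_cat /F -flatten_wd.
  by rewrite -[[:: i; j] ++ _]/(flatten (nseq k.+1 [:: i; j])) flatten_nseqS.
have [p' [q' HT]] := @wact_span i j [:: i; j] y (fun x => mem_flatten_ij (k := 1)).
have HTZ : wact M [:: i; j] (wact M F y - y) = wact M F y - y.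
  rewrite wactB Hcomm.
  have -> : wact M [:: i; j] y = (wact M [:: i; j] y - y) + y by rewrite subrK.
  by rewrite wactD HT HUP opprD addrACA subrr add0r.
rewrite HZ /= (sact_jP HMii) (sact_iP HMii) in HTZ.
case: (P_inj Hij HTZ) => E1 E2.
have Hc4 : M i j * M j i != 4.
  rewrite Hc /fourcos2; have := cos_th_lt1 R Hk; move=> H; apply/eqP => E.
  lra.
have Hp : (M i j * M j i - 4) * p = 0.
  have -> : (M i j * M j i - 4) * p =
     2 * ((- M i j * (- M j i * p - q) - p) - p) + M i j * ((- M j i * p - q) - q) by ring.
  by rewrite E1 E2 !subrr !mulr0 addr0.
have Hp0 : p = 0.
  move: Hp => /eqP; rewrite mulf_eq0 subr_eq0 (negbTE Hc4) /= => /eqP //.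
have Hq0 : q = 0 by move: E2; rewrite Hp0 mulr0 sub0r; lra.
apply/eqP; rewrite -subr_eq0 HZ Hp0 Hq0; apply/eqP/rowP => l; rewrite !mxE; ring.
Qed.

Lemma wact_rel r : relator M r -> forall y, wact M r y = y.
Proof.
case=> [x [z [k [Hm ->]]]] y.
case: Hm => [[-> ->]|[Hxz [Hk Hc]]]; first by rewrite /= sactK.
rewrite flatten_wd; exact: rel_fix.
Qed.

Lemma wact_weq u v : weq M u v -> forall y, wact M u y = wact M v y.
Proof.
elim=> [u0 y|u0 v0 _ IH y|u0 v0 t0 _ IH1 _ IH2 y|u0 r v0 Hr y].
- by [].
- by rewrite IH.
- by rewrite IH1 IH2.
- by rewrite !wact_cat (wact_rel Hr).
Qed.

End Relator.
Section Main.
Variables (R : realType) (n : nat) (M : 'M[R]_n).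
Hypothesis HM : is_EGCM M.

Let HMii : forall i, M i i = 2. Proof. by case: HM. Qed.
Let Hoff : forall i j, i != j -> M i j <= 0. Proof. by case: HM => _ []. Qed.
Let Hnz : forall x y, M x y != 0 <-> M y x != 0. Proof. by case: HM => _ [_ []]. Qed.
Let H4 : forall i j, i != j -> M i j * M j i != 0 ->
      4 <= M i j * M j i \/ exists m : nat, (3 <= m)%N /\ M i j * M j i = fourcos2 R m.
Proof. by case: HM => _ [_ [_ H]]. Qed.

Lemma alt_wd (i j : 'I_n) (l : seq 'I_n) : (forall x, x \in l -> (x == i) || (x == j)) ->
  sorted (fun x y => x != y) (rcons l i) -> l = wd i j (size l).
Proof.
elim: l => // x l IH Hall Hs.
have Hl : l = wd i j (size l).
  apply: IH; first by move=> z Hz; apply: Hall; rewrite inE Hz orbT.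
  by move: Hs; rewrite rcons_cons /= => /path_sorted.
have Hx := Hall x (mem_head _ _).
change (x :: l = (if odd (size l) then i else j) :: wd i j (size l)); rewrite -Hl.
congr cons.
case: l IH Hall Hs Hl => [|y l] _ _ Hs Hl.
  move: Hs => /= /andP [Hxi _]; move: Hx; rewrite (negbTE Hxi) /= => /eqP //.
move: Hs; rewrite rcons_cons /= => /andP [Hxy _].
have Hy : y = if odd (size l) then i else j.
  by move: Hl => /= [].
rewrite /=; move: Hy Hxy Hx; case: (odd (size l)) => -> /= Hxy;
  by rewrite (negbTE Hxy) ?orbF => /eqP.
Qed.

Lemma wlen0 w : wlen M w = 0%N -> forall v, wact M w v = v.
Proof.
move=> H v; have [u [Hu Hs]] := wlen_rep M w; rewrite H in Hs.
move/size0nil: Hs => Hs; subst u; by rewrite -(wact_weq HMii Hnz Hu).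
Qed.

Lemma pos_main N : forall w i, (wlen M w <= N)%N -> (wlen M w < wlen M (rcons w i))%N ->
  forall l, 0 <= wact M w (alpha R i) 0 l.
Proof.
elim: N => [|N IHN] w i HN Hlt.
  move=> l; rewrite wlen0 ?alphaE; [by case: (l == i) | lia].
case Hw0: (wlen M w) => [|K].
  move=> l; rewrite wlen0 ?alphaE //; by case: (l == i).
have [u [Hu Hs]] := wlen_rep M w.
case/lastP: u Hu Hs => [|u' j] Hu Hs; first by rewrite Hw0 in Hs.
rewrite size_rcons Hw0 in Hs; case: Hs => Hs.
have Hu'1 : wlen M u' = size u'.
  have := wlen_size M u'; have := wlen_cat_size M u' [:: j].
  rewrite cats1 (wlen_weq Hu) Hw0 /=; lia.
have Hj : (wlen M (rcons w j) < wlen M w)%N.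
  have E : weq M (u') (rcons w j).
    rewrite -cats1; apply: (weq_trans _ (weq_catr [:: j] Hu)).
    rewrite -cats1 -catA /=; have := weq_ii M u' j [::]; rewrite !cats0; exact: weq_sym.
  have := wlen_le E; rewrite Hw0; lia.
have Hij : i != j.
  apply/eqP => E; subst j; lia.
pose Pk k := `[< exists v vI : seq 'I_n, (forall x : 'I_n, x \in vI -> (x == i) || (x == j)) /\
   weq M (v ++ vI) w /\ wlen M w = (wlen M v + size vI)%N /\ wlen M v = k >].
have exP : exists k, Pk k.
  exists (wlen M u'); apply/asboolP; exists u', [:: j]; split.
    by move=> x; rewrite inE => ->; rewrite orbT.
  split; first by rewrite cats1.
  by split=> //; rewrite Hw0 Hu'1 Hs addn1.
case: (ex_minnP exP) => k0 /asboolP [v [vI [Hall [Hweq [Hlen Hk0]]]]] Hmin.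
have Hk0le : (k0 <= wlen M u')%N.
  apply: Hmin; apply/asboolP; exists u', [:: j]; split.
    by move=> x; rewrite inE => ->; rewrite orbT.
  split; first by rewrite cats1.
  by split=> //; rewrite Hw0 Hu'1 Hs addn1.
have Hvlt : (wlen M v <= N)%N by lia.
have Hgrow x : (x == i) || (x == j) -> (wlen M v < wlen M (rcons v x))%N.
  move=> Hx; case: (wlen_rconsP M v x) => [->//|Hd]; exfalso.
  have : (k0 <= wlen M (rcons v x))%N.
    apply: Hmin; apply/asboolP; exists (rcons v x), (x :: vI); split.
      move=> z; rewrite inE; case/orP => [/eqP -> //|]; exact: Hall.
    split.
      apply: weq_trans Hweq; rewrite -cats1 -catA /=.
      exact: (weq_ii M v x vI).
    by split=> //=; rewrite Hlen Hd addSn addnS.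
  by rewrite -Hk0 Hd ltnn.
have Hii : (i == i) || (i == j) by rewrite eqxx.
have Hjj : (j == i) || (j == j) by rewrite eqxx orbT.
have Hvi := IHN v i Hvlt (Hgrow i Hii).
have Hvj := IHN v j Hvlt (Hgrow j Hjj).
have HvIred : wlen M vI = size vI.
  have := wlen_size M vI; have := wlen_cat M v vI; rewrite (wlen_weq Hweq) Hlen leq_add2l => H1 H2.
  by apply/eqP; rewrite eqn_leq H2 H1.
have HvIi : reduced M (rcons vI i).
  rewrite /reduced size_rcons.
  case: (wlen_rconsP M vI i) => [->|Hd]; first by rewrite HvIred.
  exfalso.
  have E : weq M (v ++ rcons vI i) (rcons w i).
    by rewrite -!cats1 catA; apply: weq_catr.
  have := wlen_cat M v (rcons vI i); rewrite (wlen_weq E); lia.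
have Hsort := reduced_sorted HvIi.
have HvI : vI = wd i j (size vI).
  by apply: alt_wd.
have Hbound k : mcox M i j k -> (size vI < k)%N.
  move=> Hk; rewrite ltnNge; apply/negP => Hle.
  have Hk1 : (1 <= k)%N.
    by case: Hk => [[E _]|[_ [H2 _]]]; [by rewrite E eqxx in Hij | lia].
  by apply: (wd_long Hk Hk1 Hle); rewrite -HvI.
have Hji : j != i by rewrite eq_sym.
have [p [q [Hp [Hq HP]]]] := rank2_pos HMii Hij (Hoff Hij) (Hoff Hji) (H4 Hij) Hbound.
move=> l.
rewrite -(wact_weq HMii Hnz Hweq) wact_cat HvI HP /P wactD !wactZ !mxE.
by apply: addr_ge0; apply: mulr_ge0.
Qed.

Lemma pos_rcons w i : (wlen M w < wlen M (rcons w i))%N ->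
  forall l, 0 <= wact M w (alpha R i) 0 l.
Proof. exact: (pos_main (leqnn _)). Qed.

Lemma dichotomy a : is_root M a -> (forall l, 0 <= a 0 l) \/ (forall l, a 0 l <= 0).
Proof.
case=> w [i ->].
case: (wlen_rconsP M w i) => H; first by left; apply: pos_rcons; rewrite H.
right=> l.
have E : weq M (rcons (rcons w i) i) w.
  rewrite -!cats1 -catA /=; have := weq_ii M w i [::]; by rewrite !cats0.
have Hg : (wlen M (rcons w i) < wlen M (rcons (rcons w i) i))%N.
  by rewrite (wlen_weq E) H.
have := pos_rcons Hg l.
rewrite wact_rcons sact_alpha // wactN mxE; lra.
Qed.

Lemma pos_neg_root a : is_root M a -> (forall l, 0 <= a 0 l) -> (forall l, a 0 l <= 0) -> False.
Proof.
move=> Hr Hp Hn; have := root_neq0 HMii Hr; rewrite (_ : a = 0) ?eqxx //.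
apply/rowP => l; rewrite mxE; apply/le_anti; by rewrite Hn Hp.
Qed.

Definition multi i (a : 'rV[R]_n) := exists K : R, a = K *: alpha R i.

Lemma not_multi_pos (i : 'I_n) (a : 'rV[R]_n) : (forall l, 0 <= a 0 l) -> ~ multi i a ->
  exists l, l != i /\ 0 < a 0 l.
Proof.
move=> Hp Hm.
case: (boolP [exists l, (l != i) && (a 0 l != 0)]) => [/existsP [l /andP [Hl Ha]]|/existsPn H].
  exists l; split=> //; by rewrite lt_neqAle eq_sym Ha Hp.
exfalso; apply: Hm; exists (a 0 i); apply/rowP => l; rewrite !mxE.
case: (eqVneq l i) => [->|Hl]; first by rewrite mulr1.
move: (H l); rewrite Hl /= negbK => /eqP ->; by rewrite mulr0.
Qed.

Lemma sact_multi (i : 'I_n) (K : R) : sact M i (K *: alpha R i) = (- K) *: alpha R i.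
Proof. by rewrite sactZ sact_alpha // scalerN scaleNr. Qed.

Lemma sact_pos i b : is_root M b -> (forall l, 0 <= b 0 l) -> ~ multi i b ->
  is_pos_root M (sact M i b) /\ ~ multi i (sact M i b).
Proof.
move=> Hr Hp Hm.
have [l [Hl Hbl]] := not_multi_pos Hp Hm.
have Hr' := root_sact i Hr.
split.
  split=> //; case: (dichotomy Hr') => // Hn; exfalso.
  have := Hn l; rewrite sact_coord //; lra.
move=> [K HK]; apply: Hm; exists (- K).
by rewrite -(sactK HMii i b) HK sact_multi.
Qed.

Lemma multi_coef (i : 'I_n) (K : R) (a : 'rV[R]_n) : a = K *: alpha R i -> a 0 i = K.
Proof. by move=> ->; rewrite !mxE eqxx mulr1. Qed.

Lemma count_reduced (f : 'I_n -> nat) (Hf : forall x, fcount M x (f x)) u :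
  reduced M u -> exists s : seq 'rV[R]_n,
    uniq s /\ (forall a, a \in s <-> NM M u a) /\ size s = sumn (map f u).
Proof.
elim/last_ind: u => [|u' i IH] Hred.
  exists [::]; split=> //; split=> // a; split=> //.
  case=> [[Hr Hp] [_ Hn]]; exfalso; exact: pos_neg_root Hr Hp Hn.
have Hred' := reduced_rcons Hred.
have Hg : (wlen M u' < wlen M (rcons u' i))%N.
  by move: Hred Hred'; rewrite /reduced size_rcons => -> ->.
have Hpos := pos_rcons Hg.
have [s' [Hu' [Hm' Hs']]] := IH Hred'.
have [sP [HuP [HsP HmP]]] := Hf i.
have Hinj : injective (sact M i) := can_inj (sactK HMii i).
have HmapE a : (a \in map (sact M i) s') = (sact M i a \in s').
  by rewrite -{1}(sactK HMii i a) mem_map.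
have Hnm b : NM M u' b -> ~ multi i b.
  move=> [[Hr Hp] [Hr' Hn]] [K HK].
  have HK0 : 0 <= K by rewrite -(multi_coef HK) Hp.
  apply: (pos_neg_root Hr') _ Hn => l.
  by rewrite HK wactZ mxE mulr_ge0.
exists (map (sact M i) s' ++ sP); split; [|split].
- rewrite cat_uniq (map_inj_uniq Hinj) Hu' HuP andbT /=.
  apply/hasPn => x /HmP [[K HK] [Hr Hp]]; apply/negP; rewrite HmapE => /Hm' HN.
  have [[_ Hp'] _] := HN.
  have HK0 : 0 <= K by rewrite -(multi_coef HK) Hp.
  have HK1 : 0 <= - K.
    have := Hp' i; by rewrite HK sact_multi mxE alphaE eqxx mulr1.
  have HK2 : K = 0 by lra.
  have := root_neq0 HMii Hr; by rewrite HK HK2 scale0r eqxx.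
- move=> a; rewrite mem_cat HmapE /NM wact_rcons; split.
  + case/orP => [/Hm' HN|/HmP [[K HK] Hpr]].
    * have Hnm' := Hnm _ HN.
      have [[Hr Hp] Hn] := HN.
      have [Hpos' _] := sact_pos Hr Hp Hnm'.
      by rewrite sactK in Hpos'.
    * split=> //; split.
        apply: root_wact; apply: root_sact; by case: Hpr.
      have [_ Hp] := Hpr.
      have HK0 : 0 <= K by rewrite -(multi_coef HK) Hp.
      move=> l; rewrite HK sact_multi wactZ mxE mulNr oppr_le0.
      exact: mulr_ge0.
  + move=> [Hpa Hn]; apply/orP.
    case: (pselect (multi i a)) => Hma.
      by right; apply/HmP; split.
    left; apply/Hm'; have [Hr Hp] := Hpa.
    by have [Hps _] := sact_pos Hr Hp Hma; split.
- by rewrite size_cat size_map Hs' HsP map_rcons sumn_rcons.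
Qed.

End Main.

Lemma sumn_bounds (n : nat) (f : 'I_n -> nat) f1 f2 (u : seq 'I_n) :
  (forall x, f1 <= f x)%N -> (forall x, f x <= f2)%N ->
  (f1 * size u <= sumn (map f u) <= f2 * size u)%N.
Proof.
move=> H1 H2; elim: u => [|x u IH] /=; first by rewrite !muln0.
rewrite !mulnS; case/andP: IH => IH1 IH2; apply/andP; split.
- by apply: leq_add.
- by apply: leq_add.
Qed.

Unset Implicit Arguments. Set Strict Implicit.

Theorem proposition4p9 (R : realType) (n : nat) (M : 'M[R]_n)
  (HM : is_EGCM M) (Hcyc : unital_OA_cyclic M)
  (f : 'I_n -> nat) (Hf : forall x, fcount M x (f x))
  (f1 f2 : nat)
  (Hf1 : (exists x, f x = f1) /\ forall x, (f1 <= f x)%N)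
  (Hf2 : (exists x, f x = f2) /\ forall x, (f x <= f2)%N) :
  forall w : seq 'I_n,
    exists s : seq 'rV[R]_n,
      uniq s /\ (forall a, a \in s <-> NM M w a) /\
      (f1 * wlen M w <= size s <= f2 * wlen M w)%N.
Proof.
move=> w.
have HMii : forall i, M i i = 2 by case: HM.
have Hnz : forall x y, M x y != 0 <-> M y x != 0 by case: HM => _ [_ []].
have [u [Hu Hs]] := wlen_rep M w.
have Hred : reduced M u by rewrite /reduced (wlen_weq Hu) Hs.
have [s [Hus [Hm Hsz]]] := count_reduced HM Hf Hred.
exists s; split=> //; split.
  move=> a; rewrite Hm /NM (wact_weq HMii Hnz Hu); by [].
rewrite Hsz -Hs; apply: sumn_bounds; [exact: Hf1.2 | exact: Hf2.2].
Qed.
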